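(* Let $p$ be a prime and $G$ a residually $p$-finite group. Then every cyclic subgroup of $G$ is topologically $p$-embedded in $G$.
   Context: A group is $p$-finite if its order is a finite power of $p$; a group $G$ is residually $p$-finite if for every $g\ne 1$ in $G$ there is a $p$-finite quotient of $G$ in which the image of $g$ is nontrivial. A subgroup $H$ of $G$ is topologically $p$-embedded in $G$ if the subspace topology on $H$ induced by the pro-$p$ topology on $G$ equals the pro-$p$ topology of $H$; equivalently, for every normal subgroup $N$ of $H$ of $p$-power index there is a normal subgroup $M$ of $G$ of $p$-power index with $M\cap H\le N$. *)

(* Defs.v *)
From mathcomp Require Import all_boot all_fingroup all_solvable.
From mathcomp Require Import pgroup.
Set Implicit Arguments. Unset Strict Implicit. Unset Printing Implicit Defensive.

Record abs_group := AbsGroup {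
  carrier :> Type;
  gmul : carrier -> carrier -> carrier;
  gone : carrier;
  ginv : carrier -> carrier;
  gmulA : forall x y z, gmul x (gmul y z) = gmul (gmul x y) z;
  gmul1 : forall x, gmul gone x = x;
  gmulV : forall x, gmul (ginv x) x = gone
}.

Section Defs.
Variable G : abs_group.

Fixpoint gpow (x : G) (n : nat) : G :=
  match n with 0 => gone G | S m => gmul x (gpow x m) end.

Definition cyclic_sub (x : G) : G -> Prop :=
  fun y => exists n : nat, y = gpow x n \/ y = gpow (ginv x) n.

Definition is_subgroup (H : G -> Prop) : Prop :=
  [/\ H (gone G), (forall x y, H x -> H y -> H (gmul x y))
    & (forall x, H x -> H (ginv x))].

Definition normal_in (N H : G -> Prop) : Prop :=
  [/\ is_subgroup N, (forall y, N y -> H y)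
    & (forall h y, H h -> N y -> N (gmul (ginv h) (gmul y h)))].

Definition index_in (N H : G -> Prop) (n : nat) : Prop :=
  exists r : 'I_n -> G, (forall i, H (r i)) /\
    forall h, H h -> exists! i, N (gmul (ginv (r i)) h).

Definition normal_ppow_index (p : nat) (N H : G -> Prop) : Prop :=
  normal_in N H /\ exists k : nat, index_in N H (p ^ k).

Definition residually_p_finite (p : nat) : Prop :=
  forall g : G, g <> gone G ->
    exists (gT : finGroupType) (f : G -> gT),
      [/\ (forall x y, f (gmul x y) = (f x * f y)%g),
          (forall z : gT, exists x, f x = z),
          pgroup p [set: gT]
        & f g <> 1%g].

(* H is topologically p-embedded in G (equivalent formulation from the paper) *)
Definition top_p_embedded (p : nat) (H : G -> Prop) : Prop :=
  forall N, normal_ppow_index p N H ->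
    exists M, normal_ppow_index p M (fun _ => True) /\
      (forall y, M y -> H y -> N y).
End Defs.

(* Main.v *)
Require Import Defs.
From mathcomp Require Import all_boot all_fingroup all_solvable.
From mathcomp Require Import pgroup.
From Stdlib Require Import Classical.
Set Implicit Arguments. Unset Strict Implicit. Unset Printing Implicit Defensive.

Section GL.
Variable G : abs_group.
Local Notation "a ** b" := (gmul a b) (at level 40, left associativity).
Local Notation e := (gone G).
Local Notation inv := (@ginv G).

Lemma mulrV (a : G) : a ** inv a = e.
Proof.
have h := gmulV (inv a).
rewrite -[a ** inv a]gmul1 -h -gmulA (gmulA (inv a)) gmulV.
by rewrite gmul1.
Qed.

Lemma mulr1 (a : G) : a ** e = a.
Proof. by rewrite -(gmulV a) gmulA mulrV gmul1. Qed.

Lemma mulK (a b : G) : inv a ** (a ** b) = b.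
Proof. by rewrite gmulA gmulV gmul1. Qed.

Lemma mulKV (a b : G) : a ** (inv a ** b) = b.
Proof. by rewrite gmulA mulrV gmul1. Qed.

Lemma inv_uniq (a b : G) : a ** b = e -> inv a = b.
Proof. by move=> h; rewrite -(mulK a b) h mulr1. Qed.

Lemma invK (a : G) : inv (inv a) = a.
Proof. by apply: inv_uniq; apply: gmulV. Qed.

Lemma invM (a b : G) : inv (a ** b) = inv b ** inv a.
Proof.
apply: inv_uniq.
by rewrite -gmulA (gmulA b) mulrV gmul1 mulrV.
Qed.

Lemma gpowD (x : G) m n : gpow x (m + n) = gpow x m ** gpow x n.
Proof. by elim: m => [|m IH] /=; rewrite ?gmul1 // IH gmulA. Qed.

Lemma gpowM (x : G) m n : gpow x (m * n) = gpow (gpow x m) n.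
Proof. by elim: n => [|n IH]; rewrite ?muln0 // mulnS gpowD IH. Qed.

Lemma gpow1 (x : G) : gpow x 1 = x.
Proof. by rewrite /= mulr1. Qed.

Lemma gpowV (x : G) n : gpow (inv x) n = inv (gpow x n).
Proof.
elim: n => [|n IH] /=.
  by apply/esym/inv_uniq; rewrite gmul1.
rewrite IH -invM; congr inv.
have := gpowD x n 1; rewrite addnC gpowD gpow1 => ->; done.
Qed.

Lemma gpow_sub (x : G) i j : i <= j -> inv (gpow x i) ** gpow x j = gpow x (j - i).
Proof. by move=> h; rewrite -{1}(subnKC h) gpowD mulK. Qed.

End GL.

Section Key.
Variable G : abs_group.
Local Notation "a ** b" := (gmul a b) (at level 40, left associativity).
Local Notation e := (gone G).
Local Notation inv := (@ginv G).

Lemma min_ex (P : nat -> Prop) n : P n -> exists d, P d /\ forall j, j < d -> ~ P j.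
Proof.
elim/ltn_ind: n => n IH Pn.
case: (classic (exists j, j < n /\ P j)) => [[j [jn Pj]]|nex].
  exact: IH Pj.
exists n; split=> // j jn Pj; apply: nex; by exists j.
Qed.

Lemma key (x : G) (N : G -> Prop) n :
  normal_in N (cyclic_sub x) -> index_in N (cyclic_sub x) n -> 0 < n ->
  forall m, N (gpow x m) <-> n %| m.
Proof.
move=> [[N1 NM NV] NH _] [r [rH U]] n0.
have Npow : forall y k, N y -> N (gpow y k).
  by move=> y k Ny; elim: k => [|k IH] //=; apply: NM.
have Hpow : forall j, cyclic_sub x (gpow x j) by move=> j; exists j; left.
have coset : forall i a b, N (inv (r i) ** a) -> N (inv (r i) ** b) -> N (inv a ** b).
  move=> i a b ha hb.
  have := NM _ _ (NV _ ha) hb.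
  by rewrite invM invK -gmulA mulKV.
have [g0 gP0] := @fin_all_exists 'I_n.+1 (fun _ => 'I_n) (fun j i => N (inv (r i) ** gpow x j))
    (fun j => let: ex_intro i (conj Pi _) := U _ (Hpow j) in ex_intro _ i Pi).
pose g : 'I_n.+1 -> 'I_n := g0.
have gP : forall j, N (inv (r (g j)) ** gpow x j) := gP0.
have : ~~ injectiveb g.
  by apply/negP => /injectiveP /leq_card; rewrite !card_ord ltnn.
move=> /injectivePn [j1 [j2 neq eqg]].
have c12 : N (inv (gpow x j1) ** gpow x j2).
  apply: (coset (g j1)); first exact: gP. rewrite eqg; exact: gP.
have c21 : N (inv (gpow x j2) ** gpow x j1).
  apply: (coset (g j1)); last exact: gP. rewrite eqg; exact: gP.
have [e0 [e0p e0n Ne0]] : exists e0, [/\ 0 < e0, e0 <= n & N (gpow x e0)].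
  case: (ltngtP j1 j2) => [lt|lt|eq]; last by move: neq; rewrite -val_eqE /= eq eqxx.
  - exists (j2 - j1); split; first by rewrite subn_gt0.
      exact: leq_trans (leq_subr j1 j2) (ltn_ord j2).
    by rewrite -gpow_sub 1?ltnW.
  - exists (j1 - j2); split; first by rewrite subn_gt0.
      exact: leq_trans (leq_subr j2 j1) (ltn_ord j1).
    by rewrite -gpow_sub 1?ltnW.
have [d [[dp Nd] dmin]] := min_ex (P := fun j => 0 < j /\ N (gpow x j)) (conj e0p Ne0).
have de : d <= e0 by rewrite leqNgt; apply/negP=> h; exact: dmin _ h (conj e0p Ne0).
have Ndiv : forall m, N (gpow x m) <-> d %| m.
  move=> m; split.
  - move=> Nm.
    have Nr : N (gpow x (m %% d)).
      have := NM _ _ (NV _ (Npow _ (m %/ d) Nd)) Nm.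
      by rewrite -gpowM mulnC {2}(divn_eq m d) gpowD mulK.
    apply/dvdnP; exists (m %/ d); rewrite {1}(divn_eq m d); case: (posnP (m %% d)) => [hz|pos]; first by rewrite hz addn0. exfalso.
    exact: dmin _ (ltn_pmod m dp) (conj pos Nr).
  - by move=> /dvdnP [q ->]; rewrite mulnC gpowM; exact: Npow.
have ex : forall i : 'I_n, exists j : 'I_d, N (inv (r i) ** gpow x j).
  move=> i; case: (rH i) => m [rm|rm].
    exists (Ordinal (ltn_pmod m dp)); rewrite rm /=.
    rewrite {1}(divn_eq m d) addnC gpowD invM -gmulA gmulV mulr1.
    by apply: NV; apply/Ndiv; apply: dvdn_mull; apply: dvdnn.
  exists (Ordinal (ltn_pmod (d - m %% d) dp)); rewrite rm gpowV invK -gpowD /=.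
  apply/Ndiv; rewrite /dvdn modnDmr -modnDml subnKC ?modnn //.
  by apply: ltnW; apply: ltn_pmod.
have [h0 hP0] := fin_all_exists ex.
pose h : 'I_n -> 'I_d := h0.
have hP : forall i, N (inv (r i) ** gpow x (h i)) := hP0.
have hinj : injective h.
  move=> i1 i2 eq.
  have [i0 [_ uq]] := U _ (Hpow (h i1)).
  rewrite -(uq i1 (hP i1)) (uq i2) // eq; exact: hP.
have := leq_card h hinj; rewrite !card_ord => nd.
have dn : d = n by apply/anti_leq; rewrite nd (leq_trans de e0n).
by move=> m; rewrite -dn; exact: Ndiv.
Qed.
End Key.

Theorem lemma3p8 (p : nat) (G : abs_group) :
  prime p -> residually_p_finite G p ->
  forall x : G, top_p_embedded p (cyclic_sub x).
Proof.
move=> pr res x N [Nnorm [k idx]].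
have p0 : 0 < p ^ k by rewrite expn_gt0 prime_gt0.
have K := key Nnorm idx p0.
have Nfin : forall y, cyclic_sub x y -> (forall m, y = gpow x m \/ y = gpow (ginv x) m -> p ^ k %| m) -> N y.
  move=> y [m hm] hdiv; have dv := hdiv m hm.
  case: Nnorm => [[_ _ NV] _ _].
  by case: hm => ->; [apply/K | rewrite gpowV; apply: NV; apply/K].
case: k idx p0 K Nfin => [|k] idx p0 K Nfin.
  exists (fun _ => True); split.
    split; last first.
      exists 0; exists (fun _ => gone G); split=> // h _.
      by exists ord0; split=> // i _; rewrite ord1.
    by split=> //; split.
  move=> y _ Hy; apply: (Nfin _ Hy) => m _; by rewrite expn0 dvd1n.
have notN : ~ N (gpow x (p ^ k)).
  by rewrite K dvdn_Pexp2l ?prime_gt1 // ltnn.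
have ne1 : gpow x (p ^ k) <> gone G.
  by move=> h; apply: notN; rewrite h; case: Nnorm => [[]].
have [gT [f [fM fsurj pg fy]]] := res _ ne1.
have f1 : f (gone G) = 1%g.
  have := fM (gone G) (gone G); rewrite gmul1 => h.
  by apply: (mulgI (f (gone G))); rewrite -h mulg1.
have fV : forall a, f (ginv a) = (f a)^-1%g.
  move=> a; have := fM (ginv a) a; rewrite gmulV f1 => h.
  by apply: (mulIg (f a)); rewrite -h mulVg.
have fpow : forall m, f (gpow x m) = (f x ^+ m)%g.
  by elim=> [|m IH] //=; rewrite fM IH expgS.
have [e E] := p_natP pg; rewrite cardsT in E.
exists (fun y => f y = 1%g); split.
  split.
    split; first split.
    - exact: f1.
    - by move=> a b ha hb; rewrite fM ha hb mulg1.
    - by move=> a ha; rewrite fV ha invg1.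
    - by [].
    - by move=> h y _ hy; rewrite !fM fV hy mul1g mulVg.
  exists e; rewrite -E.
  have [pre preP] := fin_all_exists fsurj.
  exists (fun i => pre (enum_val i)); split=> // h _.
  exists (enum_rank (f h)); split.
    by rewrite /= fM fV preP enum_rankK mulVg.
  move=> i' /=; rewrite fM fV preP => /eqP; rewrite -eq_mulVg1 => /eqP <-.
  by rewrite enum_valK.
move=> y fy1 Hy; apply: (Nfin _ Hy) => m hm.
have fxm : (f x ^+ m)%g = 1%g.
  case: hm => hm; move: fy1; rewrite hm; first by rewrite fpow.
  by rewrite gpowV fV fpow => /eqP; rewrite invg_eq1 => /eqP.
have odv : (#[f x]%g %| p ^ e).
  by rewrite -E -cardsT; apply: order_dvdG; rewrite inE.
case/(dvdn_pfactor _ _ pr): odv => a _ oa.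
have ka : k < a.
  rewrite ltnNge -(dvdn_Pexp2l _ _ (prime_gt1 pr)) -oa order_dvdn -fpow.
  by apply/negP => /eqP.
apply: dvdn_trans (_ : p ^ a %| m).
  by rewrite dvdn_Pexp2l ?prime_gt1.
by rewrite -oa order_dvdn fxm.
Qed.
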